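(* For every $n\geqslant 2$, the monoid $\mathcal{AO}_n$ has rank $n$, i.e. the minimum size of a generating set of $\mathcal{AO}_n$ (as a monoid) is $n$.
   Context: Let $\Omega_n=\{1<2<\cdots<n\}$ and $\mathcal{I}_n$ the monoid of all partial injective maps of $\Omega_n$. $\mathcal{AI}_n$ is the set of all $\alpha\in\mathcal{I}_n$ with $\alpha=\sigma|_{\mathrm{Dom}(\alpha)}$ for some even permutation $\sigma$ of $\Omega_n$; $\mathcal{POI}_n$ is the set of order-preserving elements of $\mathcal{I}_n$ and $\mathcal{AO}_n=\mathcal{AI}_n\cap\mathcal{POI}_n$. *)

(* Defs.v *)
(* Omega_n = {1<...<n} is modelled by 'I_n = {0<...<n-1}
   (order-isomorphic relabelling). *)
From mathcomp Require Import all_boot all_order all_fingroup.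
Set Implicit Arguments. Unset Strict Implicit. Unset Printing Implicit Defensive.

Definition ptrans (n : nat) := {ffun 'I_n -> option 'I_n}.

Definition is_pinj n (a : ptrans n) : bool :=
  [forall x, forall y, (a x != None) && (a x == a y) ==> (x == y)].

Definition in_AI n (a : ptrans n) : bool :=
  is_pinj a &&
  [exists s : {perm 'I_n}, ~~ odd_perm s &&
     [forall x, (a x != None) ==> (a x == Some (s x))]].

Definition in_POI n (a : ptrans n) : bool :=
  is_pinj a &&
  [forall x, forall y, forall u, forall v,
     [&& a x == Some u, a y == Some v & x < y] ==> (u < v)].

Definition in_AO n (a : ptrans n) : bool := in_AI a && in_POI a.

(* monoid structure of I_n: identity and composition (a first, then b) *)
Definition pid n : ptrans n := [ffun x => Some x].
Definition pcomp n (a b : ptrans n) : ptrans n :=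
  [ffun x => if a x is Some y then b y else None].

Definition generated n (A : {set ptrans n}) (a : ptrans n) : Prop :=
  exists s : seq (ptrans n), all (fun g => g \in A) s /\ a = foldr (@pcomp n) (pid n) s.

Definition generates_AO n (A : {set ptrans n}) : Prop :=
  (forall g, g \in A -> in_AO g) /\ (forall a, in_AO a -> generated A a).

(* Main.v *)
Require Import Defs.
From mathcomp Require Import all_boot all_order all_fingroup.
From mathcomp Require Import zify.
Import Defs.
Set Implicit Arguments. Unset Strict Implicit. Unset Printing Implicit Defensive.

Definition afun (p u x : nat) : nat :=
  let x' := if p < x then x.-1 else x in if u <= x' then x'.+1 else x'.

Ltac noif t := lazymatch t with context[if _ then _ else _] => fail | _ => idtac end.
Ltac afs := rewrite /afun /=; repeat match goal with |- context [if ?b then _ else _] =>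
   noif b; case: (boolP b) => ? /= end; try lia.

Lemma afun_lt n p u x : p < n -> u < n -> x < n -> x != p -> afun p u x < n.
Proof. move=> *; afs. Qed.
Lemma afun_neq p u x : afun p u x != u.
Proof. apply/eqP; afs. Qed.
Lemma afun_comp p w u x : x != p -> afun w u (afun p w x) = afun p u x.
Proof. move=> *; afs. Qed.
Lemma afun_id p x : x != p -> afun p p x = x.
Proof. move=> *; afs. Qed.
Lemma afun_mono p u x y : x != p -> y != p -> x < y -> afun p u x < afun p u y.
Proof. move=> *; afs. Qed.
Lemma afun_inj p u x y : x != p -> y != p -> afun p u x = afun p u y -> x = y.
Proof. afs. Qed.
Lemma afun_le p u x : p <= u -> x != p -> afun p u x <= x.
Proof. move=> *; afs. Qed.
Lemma afun_ltx p u x : p < x -> x <= u -> afun p u x < x.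
Proof. move=> *; afs. Qed.
Definition alpha m (p u : nat) : ptrans m.+1 :=
  [ffun x : 'I_m.+1 => if nat_of_ord x == p then None else Some (inord (afun p u x))].

Lemma alphaE m p u (x : 'I_m.+1) :
  alpha m p u x = if nat_of_ord x == p then None else Some (inord (afun p u x)).
Proof. by rewrite ffunE. Qed.

Lemma inordV m p u (x : 'I_m.+1) : p < m.+1 -> u < m.+1 -> val x != p ->
  nat_of_ord (inord (afun p u x) : 'I_m.+1) = afun p u x.
Proof. move=> hp hu hx; rewrite inordK //; exact: afun_lt. Qed.

Lemma pext n (a b : ptrans n) : (forall x, a x = b x) -> a = b.
Proof. move=> h; exact/ffunP. Qed.

Lemma pcomp_assoc n (a b c : ptrans n) : pcomp (pcomp a b) c = pcomp a (pcomp b c).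
Proof. apply: pext=> x; rewrite !ffunE; case: (a x) => //= y; by rewrite ffunE. Qed.
Lemma pcomp_pidl n (a : ptrans n) : pcomp (pid n) a = a.
Proof. apply: pext=> x; by rewrite !ffunE. Qed.
Lemma pcomp_pidr n (a : ptrans n) : pcomp a (pid n) = a.
Proof. apply: pext=> x; rewrite !ffunE; by case: (a x) => // y; rewrite ffunE. Qed.

Lemma alpha_comp m p w u : p < m.+1 -> w < m.+1 -> u < m.+1 ->
  pcomp (alpha m p w) (alpha m w u) = alpha m p u.
Proof.
move=> hp hw hu; apply: pext=> x; rewrite !ffunE; case: eqP => //= /eqP hx.
rewrite ffunE inordV //. rewrite (negbTE (afun_neq _ _ _)) afun_comp //.
Qed.

Lemma alpha_idE m p (x : 'I_m.+1) : alpha m p p x = if nat_of_ord x == p then None else Some x.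
Proof.
rewrite ffunE; case: eqP => // /eqP hx; by rewrite afun_id // inord_val.
Qed.

Lemma gen_pid n (A : {set ptrans n}) : generated A (pid n).
Proof. by exists [::]. Qed.
Lemma gen_in n (A : {set ptrans n}) g : g \in A -> generated A g.
Proof. move=> h; exists [:: g]; by rewrite /= h pcomp_pidr. Qed.
Lemma foldr_cat_pcomp n (s1 s2 : seq (ptrans n)) :
  foldr (@pcomp n) (pid n) (s1 ++ s2) =
  pcomp (foldr (@pcomp n) (pid n) s1) (foldr (@pcomp n) (pid n) s2).
Proof. elim: s1 => [|g s IH] /=; first by rewrite pcomp_pidl. by rewrite IH pcomp_assoc. Qed.
Lemma gen_comp n (A : {set ptrans n}) a b :
  generated A a -> generated A b -> generated A (pcomp a b).
Proof.
move=> [s1 [h1 ->]] [s2 [h2 ->]]; exists (s1 ++ s2); by rewrite all_cat h1 h2 foldr_cat_pcomp.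
Qed.

Lemma pinjP n (a : ptrans n) :
  reflect (forall x y z, a x = Some z -> a y = Some z -> x = y) (is_pinj a).
Proof.
apply: (iffP forallP) => [H x y z hx hy | H x].
  have := forallP (H x) y; rewrite hx hy eqxx /=; by move/eqP.
apply/forallP=> y; apply/implyP=> /andP [hx /eqP hxy]; apply/eqP.
case E: (a x) hx hxy => [z|] // _ hy; exact: (H x y z).
Qed.

Definition opb n (a : ptrans n) : bool :=
  [forall x, forall y, forall u, forall v,
     [&& a x == Some u, a y == Some v & x < y] ==> (u < v)].

Lemma opP n (a : ptrans n) :
  reflect (forall x y u v, a x = Some u -> a y = Some v -> x < y -> u < v) (opb a).
Proof.
apply: (iffP forallP) => [H x y u v hx hy hxy | H x].
  move: (H x) => /forallP/(_ y)/forallP/(_ u)/forallP/(_ v); by rewrite hx hy hxy !eqxx.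
do 3 (apply/forallP => ?); apply/implyP => /and3P [/eqP h1 /eqP h2 h3]; exact: H h1 h2 h3.
Qed.

Lemma pinj_comp n (a b : ptrans n) : is_pinj a -> is_pinj b -> is_pinj (pcomp a b).
Proof.
move=> /pinjP ha /pinjP hb; apply/pinjP => x y z; rewrite !ffunE.
case E1: (a x) => [x'|] //; case E2: (a y) => [y'|] // h1 h2.
have := hb _ _ _ h1 h2 => e; subst; exact: ha E1 E2.
Qed.

Lemma op_comp n (a b : ptrans n) : opb a -> opb b -> opb (pcomp a b).
Proof.
move=> /opP ha /opP hb; apply/opP => x y u v; rewrite !ffunE.
case E1: (a x) => [x'|] //; case E2: (a y) => [y'|] // h1 h2 hxy.
exact: hb h1 h2 (ha _ _ _ _ E1 E2 hxy).
Qed.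

Lemma alpha_pinj m p u : p < m.+1 -> u < m.+1 -> is_pinj (alpha m p u).
Proof.
move=> hp hu; apply/pinjP => x y z; rewrite !alphaE.
case: eqP => // /eqP hx; case: eqP => // /eqP hy [<-] [] /(congr1 (@nat_of_ord _)).
rewrite !inordV // => /afun_inj => h; apply: val_inj; symmetry; exact: h hy hx.
Qed.

Lemma alpha_op m p u : p < m.+1 -> u < m.+1 -> opb (alpha m p u).
Proof.
move=> hp hu; apply/opP => x y a b; rewrite !alphaE.
case: eqP => // /eqP hx; case: eqP => // /eqP hy [<-] [<-] hxy.
rewrite !inordV //; exact: afun_mono.
Qed.
Definition sigf m (p u : 'I_m.+1) (x : 'I_m.+1) : 'I_m.+1 :=
  if nat_of_ord x == p then u else inord (afun p u x).

Lemma sigfV m (p u x : 'I_m.+1) :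
  nat_of_ord (sigf p u x) = if nat_of_ord x == p then nat_of_ord u else afun p u x.
Proof. rewrite /sigf; case: eqP => // /eqP hx; by rewrite inordV. Qed.

Lemma sigf_inj m (p u : 'I_m.+1) : injective (sigf p u).
Proof.
move=> x y /(congr1 (@nat_of_ord _)); rewrite !sigfV.
case: eqP => [hx|/eqP hx]; case: eqP => [hy|/eqP hy].
- move=> _; apply: val_inj; by rewrite /= hx hy.
- move=> e; by move: (afun_neq p u y); rewrite -e eqxx.
- move=> e; by move: (afun_neq p u x); rewrite e eqxx.
- move/afun_inj => h; apply: val_inj; exact: h hx hy.
Qed.

Definition sig m (p u : 'I_m.+1) : {perm 'I_m.+1} := perm (@sigf_inj m p u).

Lemma sigV m (p u x : 'I_m.+1) :
  nat_of_ord (sig p u x) = if nat_of_ord x == p then nat_of_ord u else afun p u x.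
Proof. by rewrite permE sigfV. Qed.

Lemma sig_step m (p u0 u : 'I_m.+1) : nat_of_ord u = (nat_of_ord u0).+1 ->
  sig p u = (sig p u0 * tperm u0 u)%g.
Proof.
move=> hu; apply/permP => x; rewrite permM; apply: val_inj => /=.
case: tpermP => [e|e|n1 n2].
- move: e => /(congr1 (@nat_of_ord _)); rewrite !sigV hu /afun; case: eqP => //= hx;
  repeat match goal with |- context [if ?b then _ else _] =>
   noif b; case: (boolP b) => ? /= end; try lia.
- move: e => /(congr1 (@nat_of_ord _)); rewrite !sigV hu /afun; case: eqP => //= hx;
  repeat match goal with |- context [if ?b then _ else _] =>
   noif b; case: (boolP b) => ? /= end; try lia.
- have n1' : nat_of_ord (sig p u0 x) <> nat_of_ord u0 by move=> h; apply: n1; exact: val_inj.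
  have n2' : nat_of_ord (sig p u0 x) <> nat_of_ord u by move=> h; apply: n2; exact: val_inj.
  move: n1' n2'; rewrite !sigV hu /afun; case: eqP => //= hx;
  repeat match goal with |- context [if ?b then _ else _] =>
   noif b; case: (boolP b) => ? /= end; try lia.
Qed.

Lemma sig_id m (p : 'I_m.+1) : sig p p = 1%g.
Proof.
apply/permP => x; rewrite perm1; apply: val_inj => /=; rewrite sigV.
case: eqP => // /eqP hx; exact: afun_id.
Qed.

Lemma odd_sig m (p u : 'I_m.+1) : odd_perm (sig p u) = odd p (+) odd u.
Proof.
suff H : forall k (u : 'I_m.+1), nat_of_ord u = k ->
    odd_perm (sig p u) (+) odd u = odd_perm (sig p ord0).
  have := H _ p erefl; rewrite sig_id odd_perm1 /= => e.
  have := H _ u erefl; rewrite -e; by case: (odd_perm _); case: (odd p); case: (odd u).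
elim=> [|k IH] v hv.
  have -> : v = ord0 by apply: val_inj.
  by rewrite /= addbF.
have hk : k < m.+1 by move: (ltn_ord v); rewrite hv; lia.
have hk' : nat_of_ord (inord k : 'I_m.+1) = k by rewrite inordK.
rewrite (sig_step p (u0 := inord k) (u := v)); last by rewrite hv hk'.
rewrite odd_permM odd_tperm -(IH _ hk') hv hk'.
have -> : (inord k != v) = true.
  apply/eqP => e; move: hv; rewrite -e hk'; lia.
by rewrite /=; case: (odd_perm _); case: (odd k).
Qed.
Lemma alpha_AO m (p u : nat) : p < m.+1 -> u < m.+1 -> odd p = odd u -> in_AO (alpha m p u).
Proof.
move=> hp hu hpu; rewrite /in_AO /in_AI /in_POI alpha_pinj //=.
have := alpha_op (m := m) hp hu; rewrite /opb => -> /=.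
rewrite andbT; apply/existsP; exists (sig (inord p) (inord u)).
rewrite odd_sig !inordK // hpu addbb /=; apply/forallP => x; apply/implyP.
rewrite alphaE; case: ifP => //= /negbT hx _; apply/eqP; congr Some; apply: val_inj.
rewrite /= sigV !inordK //; last exact: afun_lt.
case: eqP => // e; by move/eqP: hx.
Qed.

Definition fgen m (i : 'I_m.+1) : ptrans m.+1 :=
  if i < m.-1 then alpha m i i.+2 else alpha m i (odd i).

Definition Agen m : {set ptrans m.+1} := [set fgen i | i : 'I_m.+1].

Lemma fgen_AO m (i : 'I_m.+1) : 0 < m -> in_AO (fgen i).
Proof.
move=> hm; rewrite /fgen; case: ifP => h.
  apply: alpha_AO => //; [lia | by rewrite /= negbK].
apply: alpha_AO => //; [case: (odd i) => /=; lia | by rewrite oddb].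
Qed.

Lemma fgen_inj m : injective (@fgen m).
Proof.
move=> i j e.
have h1 : forall k : 'I_m.+1, fgen k k = None by move=> k; rewrite /fgen; case: ifP => _; rewrite alphaE eqxx.
have h2 : forall k l : 'I_m.+1, l != k -> fgen k l != None.
  move=> k l hl; rewrite /fgen; case: ifP => _; rewrite alphaE; case: ifP => // /eqP e0; case/eqP: hl; apply: val_inj; exact: e0.
apply/eqP; apply: contraT => hij.
have := h2 j i; rewrite -e h1; move=> /(_ hij); by rewrite eqxx.
Qed.

Lemma card_Agen m : #|Agen m| = m.+1.
Proof. by rewrite card_imset ?card_ord //; exact: fgen_inj. Qed.

Lemma odd_gap i j : odd i = odd j -> i < j -> exists k, j = i + 2 * k.+1.
Proof.
move=> ho hij; exists ((j - i)./2.-1).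
have := odd_double_half i; have := odd_double_half j; rewrite ho -!muln2.
case: (odd j) => /=; lia.
Qed.

Lemma gen_two m (hm : 0 < m) i : i.+2 < m.+1 -> generated (Agen m) (alpha m i i.+2).
Proof.
move=> hi; have hi' : i < m.+1 by lia.
apply: gen_in; apply/imsetP; exists (inord i) => //.
rewrite /fgen inordK //; have -> : i < m.-1 by lia.
by [].
Qed.

Lemma gen_fwd m (hm : 0 < m) k i : i + 2 * k.+1 < m.+1 ->
  generated (Agen m) (alpha m i (i + 2 * k.+1)).
Proof.
elim: k i => [|k IH] i hi.
  have -> : i + 2 * 1 = i.+2 by lia.
  apply: gen_two => //; lia.
have -> : alpha m i (i + 2 * k.+2) = pcomp (alpha m i i.+2) (alpha m i.+2 (i.+2 + 2 * k.+1)).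
  rewrite alpha_comp; try lia; congr alpha; lia.
apply: gen_comp; last by apply: IH; lia.
apply: gen_two => //; lia.
Qed.

Lemma gen_fwd' m (hm : 0 < m) i j : j < m.+1 -> odd i = odd j -> i < j ->
  generated (Agen m) (alpha m i j).
Proof. move=> hj ho hij; have [k hk] := odd_gap ho hij; subst j; exact: gen_fwd. Qed.

Lemma gen_alpha m (hm : 0 < m) p u : p < m.+1 -> u < m.+1 -> odd p = odd u ->
  generated (Agen m) (alpha m p u).
Proof.
move=> hp hu ho.
pose t := if odd m == odd p then m else m.-1.
have ht : t < m.+1 by rewrite /t; case: ifP => _; lia.
have hot : odd t = odd p.
  rewrite /t; case: ifP => [/eqP //|/negbT h]; move: h; case: m hm {hp hu ht t} => // m' _ /=.
  by case: (odd p); case: (odd m').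
have hpt : p <= t.
  rewrite /t; case: ifP => h; first lia.
  have : p != m by apply/eqP => e; move: h; rewrite e eqxx.
  lia.
have hb : odd p < m.+1 by case: (odd p) => /=; lia.
have gtb : generated (Agen m) (alpha m t (odd p)).
  apply: gen_in; apply/imsetP; exists (inord t) => //.
  rewrite /fgen inordK //; have -> : (t < m.-1) = false by rewrite /t; case: ifP => _; lia.
  by rewrite hot.
have gtu : generated (Agen m) (alpha m t u).
  have : odd p <= u by rewrite ho; case E: (odd u) => //=; exact: odd_gt0 E.
  rewrite leq_eqVlt => /orP [/eqP <- //|hlt].
  rewrite -(alpha_comp (w := odd p)) //; apply: gen_comp => //.
  by apply: gen_fwd' => //; rewrite oddb.
move: hpt; rewrite leq_eqVlt => /orP [/eqP -> //|hlt].
rewrite -(alpha_comp (w := t)) //; apply: gen_comp => //.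
by apply: gen_fwd' => //; rewrite hot.
Qed.
Lemma AO_parts n (a : ptrans n) : in_AO a ->
  [/\ is_pinj a, opb a & exists s : {perm 'I_n}, ~~ odd_perm s /\
     forall x y, a x = Some y -> y = s x].
Proof.
case/andP => /andP [h1 /existsP [s /andP [hs /forallP hx]]] /andP [_ hop].
split => //; exists s; split => // x y e; move: (hx x); rewrite e /= => /eqP [] //.
Qed.

Lemma fixP n (b : ptrans n) : is_pinj b -> opb b ->
  (forall x y, b x = Some y -> y < x -> b y != None) ->
  (forall x y, b x = Some y -> x < y -> exists w, b w = Some x) ->
  forall x y, b x = Some y -> y = x.
Proof.
move=> /pinjP hi /opP ho H1 H2.
suff H : forall k x y, nat_of_ord x < k -> b x = Some y -> y = x.
  move=> x y; exact: H (ltnSn _).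
elim=> [|k IH] x y //; rewrite ltnS => hk hx.
case: (ltngtP y x) => hyx.
- have := H1 _ _ hx hyx; case E: (b y) => [y'|] // _.
  have e := IH _ _ (leq_trans hyx hk) E; rewrite e in E.
  have := hi _ _ _ hx E => exy; by rewrite exy ltnn in hyx.
- have [w hw] := H2 _ _ hx hyx.
  case: (ltngtP w x) => hwx.
  + have := IH _ _ (leq_trans hwx hk) hw => e; by rewrite e ltnn in hwx.
  + have := ho _ _ _ _ hx hw hwx; lia.
  + have e : w = x by apply: val_inj.
    rewrite e hx in hw; case: hw => e'; by rewrite e' ltnn in hyx.
- exact: val_inj.
Qed.

Lemma AO_total n (a : ptrans n) : in_AO a -> (forall x, a x != None) -> a = pid n.
Proof.
move=> hA hT; have [hi ho [s [_ hs]]] := AO_parts hA.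
have hs' : forall x, a x = Some (s x).
  move=> x; move: (hT x); case E: (a x) => [y|] // _; by rewrite (hs _ _ E).
apply: pext => x; rewrite ffunE; case E: (a x) (hT x) => [y|] // _; congr Some.
apply: (fixP hi ho) E.
- move=> x' y' _ _; exact: hT.
- move=> x' y' _ _; exists (s^-1 x')%g; by rewrite hs' permKV.
Qed.

Lemma foldr_gen n (A : {set ptrans n}) s :
  (forall g, g \in s -> generated A g) -> generated A (foldr (@pcomp n) (pid n) s).
Proof.
elim: s => [|g s IH] H /=; first exact: gen_pid.
apply: gen_comp; first by apply: H; rewrite inE eqxx.
apply: IH => g' hg'; apply: H; by rewrite inE hg' orbT.
Qed.

Lemma foldr_alpha_id m (s : seq 'I_m.+1) :
  foldr (@pcomp m.+1) (pid m.+1) (map (fun x : 'I_m.+1 => alpha m x x) s) =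
  [ffun z => if z \in s then None else Some z].
Proof.
elim: s => [|x s IH] /=; first by apply: pext => z; rewrite !ffunE.
apply: pext => z; rewrite ffunE alpha_idE ffunE in_cons.
have -> : (nat_of_ord z == nat_of_ord x) = (z == x) by [].
case: (z == x) => //=; by rewrite IH ffunE.
Qed.

Lemma gen_pidpart m (hm : 0 < m) (b : ptrans m.+1) :
  (forall x, b x = None \/ b x = Some x) -> generated (Agen m) b.
Proof.
move=> H; pose s := [seq x <- enum 'I_m.+1 | b x == None].
have -> : b = foldr (@pcomp m.+1) (pid m.+1) (map (fun x : 'I_m.+1 => alpha m x x) s).
  rewrite foldr_alpha_id; apply: pext => z; rewrite ffunE mem_filter mem_enum andbT.
  by case: (H z) => ->.
apply: foldr_gen => g /mapP [x _ ->]; apply: gen_alpha => //.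
Qed.
Lemma exists_hole_gen n (A : {set ptrans n}) (hA : forall g, g \in A -> in_AO g) (i : 'I_n) s :
  all (fun g => g \in A) s -> foldr (@pcomp n) (pid n) s i = None ->
  (forall x, x != i -> foldr (@pcomp n) (pid n) s x != None) ->
  exists2 g, g \in A & g i = None /\ forall x, x != i -> g x != None.
Proof.
elim: s => [|g s IH] /=; first by rewrite ffunE.
case/andP => hg hs hi hx.
case: (boolP [forall x, g x != None]) => [/forallP ht|/forallP hnt].
  have eg := AO_total (hA _ hg) ht; rewrite eg pcomp_pidl in hi hx.
  exact: IH.
have hgx : forall x, x != i -> g x != None.
  move=> x hxi; move: (hx x hxi); rewrite ffunE; by case: (g x).
exists g => //; split => //.
apply/eqP; apply: contraT => hgi; exfalso; apply: hnt => x.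
case: (eqVneq x i) => [->|hxi] //; exact: hgx.
Qed.

Lemma lower_bound m (A : {set ptrans m.+1}) : generates_AO A -> m.+1 <= #|A|.
Proof.
move=> [hA hG].
pose hole (g : ptrans m.+1) := odflt ord0 [pick x | g x == None].
have sub : [set: 'I_m.+1] \subset hole @: A.
  apply/subsetP => i _.
  have hi : in_AO (alpha m i i) by apply: alpha_AO.
  have [s [hs es]] := hG _ hi.
  have [||g gA [g1 g2]] := @exists_hole_gen _ A hA i s hs.
  - by rewrite -es alpha_idE eqxx.
  - move=> x hx; rewrite -es alpha_idE.
    have -> : (nat_of_ord x == nat_of_ord i) = (x == i) by [].
    by rewrite (negbTE hx).
  apply/imsetP; exists g => //; rewrite /hole.
  case: pickP => [x /eqP hx|none] /=.
    apply/eqP; apply: contraT => hxi; have := g2 x; rewrite eq_sym in hxi.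
    by rewrite hx eqxx => /(_ hxi).
  by move: (none i); rewrite g1 eqxx.
have := subset_leq_card sub; rewrite cardsT card_ord => h.
exact: leq_trans h (leq_imset_card _ _).
Qed.
Lemma alphaS m p u (x : 'I_m.+1) : p < m.+1 -> u < m.+1 -> nat_of_ord x != p ->
  alpha m p u x = Some (inord (afun p u x)).
Proof. move=> hp hu hx; by rewrite alphaE (negbTE hx). Qed.

Lemma AO_rank1 m (hm : 0 < m) (a : ptrans m.+1) (p : 'I_m.+1) :
  in_AO a -> a p = None -> (forall x, x != p -> a x != None) ->
  generated (Agen m) a.
Proof.
move=> hA hp hx; have [hi ho [s [hev hs]]] := AO_parts hA.
have hs' : forall x, x != p -> a x = Some (s x).
  move=> x hxp; move: (hx x hxp); case E: (a x) => [y|] // _; by rewrite (hs _ _ E).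
pose u := s p.
have hsu : forall x, x != p -> nat_of_ord (s x) != u.
  move=> x hxp; apply/eqP => e; have e' : s x = s p by apply: val_inj.
  by move: hxp; rewrite (perm_inj e') eqxx.
pose b := pcomp a (alpha m u p).
have hbx : forall x, x != p -> b x = Some (inord (afun u p (s x))).
  move=> x hxp; rewrite /b ffunE hs' // alphaS //; exact: hsu.
have hbp : b p = None by rewrite /b ffunE hp.
have hbi : is_pinj b by apply: pinj_comp => //; apply: alpha_pinj.
have hbo : opb b by apply: op_comp => //; apply: alpha_op.
have hbv : forall x y, b x = Some y -> x != p /\ nat_of_ord y = afun u p (s x).
  move=> x y e; have hxp : x != p by apply/eqP => ex; move: e; rewrite ex hbp.
  split => //; move: e; rewrite hbx // => - [<-]; rewrite inordK //; apply: afun_lt => //.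
  exact: hsu.
have hfix : forall x y, b x = Some y -> y = x.
  apply: (fixP hbi hbo).
  - move=> x' y' e' _; have [_ hy'] := hbv _ _ e'.
    have hy'p : nat_of_ord y' != p.
      apply/eqP => ey; move: (afun_neq u p (s x')); by rewrite -hy' ey eqxx.
    by rewrite hbx.
  - move=> x' y' e' _; have [hx'p _] := hbv _ _ e'.
    pose z : 'I_m.+1 := inord (afun p u x').
    have hz : nat_of_ord z = afun p u x' by rewrite inordK //; apply: afun_lt.
    have hwp : (s^-1 z)%g != p.
      apply/eqP => ew; move: (afun_neq p u x'); by rewrite -hz -[z](permKV s) ew eqxx.
    exists (s^-1 z)%g; rewrite hbx // permKV; congr Some; apply: val_inj.
    rewrite /= hz afun_comp // afun_id //.
    by rewrite inordK.
have hsx : forall x, x != p -> nat_of_ord (s x) = afun p u x.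
  move=> x hxp; have := hfix _ _ (hbx x hxp) => /(congr1 (@nat_of_ord _)).
  rewrite inordK; last by apply: afun_lt => //; exact: hsu.
  move=> <-; rewrite afun_comp ?afun_id //; exact: hsu.
have es : s = sig p u.
  apply/permP => x; apply: val_inj; rewrite /= sigV.
  case: eqP => [e|/eqP ne]; first by rewrite (_ : x = p) //; apply: val_inj.
  apply: hsx; by apply: contra ne => /eqP ->.
have hpu : odd p = odd u by move: hev; rewrite es odd_sig; case: (odd p); case: (odd u).
have -> : a = alpha m p u.
  apply: pext => x; rewrite alphaE; case: eqP => [e|/eqP ne].
    by rewrite (_ : x = p) //; apply: val_inj.
  have hxp : x != p by apply: contra ne => /eqP ->.
  rewrite hs' //; congr Some; apply: val_inj; rewrite /= hsx // inordK //; exact: afun_lt.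
exact: gen_alpha.
Qed.
Lemma gap_lemma m (P : pred 'I_m.+1) (p q : 'I_m.+1) : p != q -> ~~ P p -> ~~ P q ->
  forall h0 d0 : 'I_m.+1, ~~ P h0 -> P d0 -> h0 < d0 ->
  exists (h d : 'I_m.+1) (j : nat),
    [/\ ~~ P h, P d, h < d, d <= j /\ j < m.+1 & odd h = odd j].
Proof.
move=> npq hp hq h0 d0 hh0 hd0 hlt.
case: (@arg_minnP _ h0 (fun i => ~~ P i) (fun i => nat_of_ord i) hh0) => h hh hmin.
have hd0' : P d0 && (h < d0) by rewrite hd0 /=; apply: leq_ltn_trans (hmin _ hh0) hlt.
case: (@arg_minnP _ d0 (fun i => P i && (h < i)) (fun i => nat_of_ord i) hd0') => d /andP [hd hhd] dmin.
have holes : forall k : 'I_m.+1, h <= k -> k < d -> ~~ P k.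
  move=> k h1 h2; apply/negP => Pk; move: h1; rewrite leq_eqVlt => /orP [/eqP e|e].
    have ek : k = h by apply: val_inj. by move: hh; rewrite -ek Pk.
  have := dmin k; rewrite Pk e => /(_ isT); lia.
case: (boolP (odd h == odd d)) => [/eqP ho|ho].
  exists h, d, (nat_of_ord d); split => //; split => //.
case: (boolP (d.+1 < m.+1)) => hdm.
  exists h, d, d.+1; split => //.
  by rewrite oddS; move: ho; case: (odd h); case: (odd d).
have hd_eq : nat_of_ord d = m by move: (ltn_ord d); lia.
case: (ltnP h.+1 d) => hh1; last first.
  exfalso.
  have key : forall k : 'I_m.+1, ~~ P k -> nat_of_ord k = h.
    move=> k hk; have := hmin _ hk; have := ltn_ord k => hkm; rewrite leq_eqVlt => /orP [/eqP e //| hlt2].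
    have ekd : k = d by apply: val_inj; rewrite /=; lia.
    by move: hk; rewrite ekd hd.
  by move: npq; rewrite -(inj_eq val_inj) /= (key _ hp) (key _ hq) eqxx.
have hh1m : h.+1 < m.+1 by lia.
exists (inord h.+1), d, (nat_of_ord d); rewrite inordK //; split => //.
- apply: holes; rewrite ?inordK //.
- by rewrite oddS; move: ho; case: (odd h); case: (odd d).
Qed.
Definition mu m (b : ptrans m.+1) : nat :=
  \sum_(x : 'I_m.+1) (if b x is Some y then nat_of_ord x + nat_of_ord y else 0).

Definition Inv m (b : ptrans m.+1) : Prop :=
  [/\ is_pinj b, opb b,
      exists p q : 'I_m.+1, [/\ p != q, b p = None & b q = None] &
      exists u v : 'I_m.+1, [/\ u != v & forall x, b x != Some u /\ b x != Some v]].

Lemma sum_lt n (F G : 'I_n -> nat) d : (forall i, F i <= G i) -> F d < G d ->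
  \sum_i F i < \sum_i G i.
Proof.
move=> hle hd; rewrite (bigD1 d) //= [X in _ < X](bigD1 d) //=.
rewrite -addSn; apply: leq_add => //; apply: leq_sum => i _; exact: hle.
Qed.

Lemma alpha_back m h j (z : 'I_m.+1) : h < m.+1 -> j < m.+1 -> nat_of_ord z != h ->
  alpha m j h (inord (afun h j z)) = Some z.
Proof.
move=> hh hj hz; rewrite alphaS //; last by rewrite inordK; [exact: afun_neq | apply: afun_lt].

by rewrite inordV // afun_comp // afun_id // inord_val.
Qed.

Lemma ident_dom m h j (b : ptrans m.+1) : h < m.+1 -> j < m.+1 ->
  (forall x : 'I_m.+1, nat_of_ord x = h -> b x = None) ->
  pcomp (alpha m h j) (pcomp (alpha m j h) b) = b.
Proof.
move=> hh hj hb; rewrite -pcomp_assoc alpha_comp //.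
apply: pext => x.
rewrite ffunE alpha_idE; case: eqP => [e|_] //; by rewrite hb.
Qed.

Lemma ident_img m h j (b : ptrans m.+1) : h < m.+1 -> j < m.+1 ->
  (forall x y, b x = Some y -> nat_of_ord y != h) ->
  pcomp (pcomp b (alpha m h j)) (alpha m j h) = b.
Proof.
move=> hh hj hb; rewrite pcomp_assoc alpha_comp //; apply: pext => x.
rewrite ffunE; case E: (b x) => [y|] //; rewrite alpha_idE (negbTE (hb _ _ E)) //.
Qed.
Lemma sig_ne m (p u z : 'I_m.+1) : z != p -> sig p u z = inord (afun p u z).
Proof. move=> hz; rewrite permE /sigf; case: eqP => // e; case/eqP: hz; exact: val_inj. Qed.
Lemma sig_eq m (p u : 'I_m.+1) : sig p u p = u.
Proof. by rewrite permE /sigf eqxx. Qed.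

Lemma step_dom m (b : ptrans m.+1) (h d : 'I_m.+1) (j : nat) :
  Inv b -> b h = None -> b d != None -> h < d -> d <= j -> j < m.+1 ->
  Inv (pcomp (alpha m j h) b) /\ mu (pcomp (alpha m j h) b) < mu b.
Proof.
move=> [hi ho [p [q [npq hp hq]]] [u [v [nuv huv]]]] hh hd hhd hdj hj.
pose J : 'I_m.+1 := inord j.
have hJ : nat_of_ord J = j by rewrite inordK.
pose s := sig h J.
have hs : forall z, pcomp (alpha m j h) b (s z) = b z.
  move=> z; case: (eqVneq z h) => [->|hz].
    by rewrite /s sig_eq ffunE alphaE hJ eqxx hh.
  rewrite /s sig_ne // ffunE hJ alpha_back //.
split.
  split.
  - apply: pinj_comp => //; exact: alpha_pinj.
  - apply: op_comp => //; exact: alpha_op.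
  - exists (s p), (s q); split; rewrite ?hs //.
    by apply: contra npq => /eqP /perm_inj ->.
  - exists u, v; split => // x; rewrite ffunE.
    case: (alpha m j h x) => [y|] //; exact: huv.
rewrite /mu (reindex_inj (@perm_inj _ s)) /=.
apply: (@sum_lt _ _ _ d) => [z|]; rewrite hs.
  case E: (b z) => [y|] //; rewrite leq_add2r.
  have hz : z != h by apply/eqP => ez; move: E; rewrite ez hh.
  rewrite /s sig_ne // inordK ?hJ; last by apply: afun_lt => //; rewrite ?hJ.
  by apply: afun_le => //; lia.
case E: (b d) hd => [y|] // _; rewrite ltn_add2r.
have hz : d != h by apply/eqP => ez; move: E; rewrite ez hh.
rewrite /s sig_ne // inordK ?hJ; last by apply: afun_lt => //; rewrite ?hJ.
exact: afun_ltx.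
Qed.

Lemma step_img m (b : ptrans m.+1) (h d x0 : 'I_m.+1) (j : nat) :
  Inv b -> (forall x, b x != Some h) -> b x0 = Some d -> h < d -> d <= j -> j < m.+1 ->
  Inv (pcomp b (alpha m h j)) /\ mu (pcomp b (alpha m h j)) < mu b.
Proof.
move=> [hi ho [p [q [npq hp hq]]] [u [v [nuv huv]]]] hh hd hhd hdj hj.
pose J : 'I_m.+1 := inord j.
have hJ : nat_of_ord J = j by rewrite inordK.
pose s := sig h J.
have hs : forall x, pcomp b (alpha m h j) x = if b x is Some y then Some (s y) else None.
  move=> x; rewrite ffunE; case E: (b x) => [y|] //.
  have hy : y != h by apply: contra (hh x) => /eqP <-; rewrite E.
  rewrite alphaS //.
  by rewrite /s sig_ne // hJ.
split.
  split.
  - apply: pinj_comp => //; exact: alpha_pinj.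
  - apply: op_comp => //; exact: alpha_op.
  - exists p, q; split; by rewrite ?hs ?hp ?hq.
  - exists (s u), (s v); split; first by apply: contra nuv => /eqP /perm_inj ->.
    move=> x; rewrite hs; case E: (b x) => [y|] //; split; apply/eqP => -[] /perm_inj ey;
      move: (huv x); rewrite E ey eqxx //; by case.
rewrite /mu; apply: (@sum_lt _ _ _ x0) => [z|]; rewrite hs.
  case E: (b z) => [y|] //; rewrite leq_add2l.
  have hy : y != h by apply: contra (hh z) => /eqP <-; rewrite E.
  rewrite /s sig_ne // inordK ?hJ; last by apply: afun_lt => //; rewrite ?hJ.
  by apply: afun_le => //; lia.
rewrite hd ltn_add2l.
have hy : d != h by apply: contra (hh x0) => /eqP <-; rewrite hd.
rewrite /s sig_ne // inordK ?hJ; last by apply: afun_lt => //; rewrite ?hJ.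
exact: afun_ltx.
Qed.
Lemma descent m (hm : 0 < m) k : forall b : ptrans m.+1, mu b < k -> Inv b -> generated (Agen m) b.
Proof.
elim: k => [|k IH] b // hmu hInv.
have [hi ho [p [q [npq hp hq]]] [u [v [nuv huv]]]] := hInv.
case: (boolP [exists h0, exists d0, [&& b h0 == None, b d0 != None & h0 < d0]]).
  move=> /existsP [h0 /existsP [d0 /and3P [/eqP hh0 hd0 hlt]]].
  have := @gap_lemma m (fun x => b x != None) p q npq _ _ h0 d0 _ hd0 hlt.
  rewrite /= hp hq hh0 => /(_ isT isT isT) [h [d [j [/negbNE/eqP hh hd hhd [hdj hjm] hpar]]]].
  have [hInv' hmu'] := step_dom hInv hh hd hhd hdj hjm.
  have hid : forall x : 'I_m.+1, nat_of_ord x = h -> b x = None.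
    move=> x ex; by rewrite (_ : x = h) //; apply: val_inj.
  rewrite -(@ident_dom m h j b (ltn_ord h) hjm hid).
  apply: gen_comp; first by apply: gen_alpha.
  apply: IH => //; lia.
move=> nodom.
pose P := fun y : 'I_m.+1 => [exists x, b x == Some y].
case: (boolP [exists h0, exists d0, [&& ~~ P h0, P d0 & h0 < d0]]).
  move=> /existsP [h0 /existsP [d0 /and3P [hh0 hd0 hlt]]].
  have hPu : ~~ P u by apply/existsPn => x; exact: (huv x).1.
  have hPv : ~~ P v by apply/existsPn => x; exact: (huv x).2.
  have [h [d [j [hh hd hhd [hdj hjm] hpar]]]] := @gap_lemma m P u v nuv hPu hPv h0 d0 hh0 hd0 hlt.
  have hh' : forall x, b x != Some h by move=> x; apply: contra hh => e; apply/existsP; exists x.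
  have [x0 /eqP hx0] := existsP hd.
  have [hInv' hmu'] := step_img hInv hh' hx0 hhd hdj hjm.
  have hid : forall x y, b x = Some y -> nat_of_ord y != h.
    move=> x y e; apply/eqP => ey; move: (hh' x); rewrite e (_ : y = h) ?eqxx //; exact: val_inj.
  rewrite -(@ident_img m h j b (ltn_ord h) hjm hid).
  apply: gen_comp; last by apply: gen_alpha => //; exact: ltn_ord.
  apply: IH => //; lia.
move=> noimg.
apply: gen_pidpart => // x; case E: (b x) => [y|]; [right | by left].
congr Some; apply: (fixP hi ho) E.
- move=> x' y' e hlt; apply/eqP => ey; move/negP: nodom; apply.
  apply/existsP; exists y'; apply/existsP; exists x'; by rewrite ey e hlt.
- move=> x' y' e hlt; case: (boolP (P x')) => [/existsP [w /eqP hw]|hn]; first by exists w.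
  exfalso; move/negP: noimg; apply; apply/existsP; exists x'; apply/existsP; exists y'.
  rewrite hn hlt /= andbT; apply/existsP; exists x'; by rewrite e.
Qed.

Lemma AO_gen m (hm : 0 < m) (a : ptrans m.+1) : in_AO a -> generated (Agen m) a.
Proof.
move=> ha.
case: (boolP [forall x, a x != None]) => [/forallP ht|/forallPn [p]].
  rewrite (AO_total ha ht); exact: gen_pid.
rewrite negbK => /eqP hp.
case: (boolP [forall x, (x != p) ==> (a x != None)]) => [/forallP h1|/forallPn [q]].
  apply: (AO_rank1 hm ha hp) => x hx; exact: (implyP (h1 x) hx).
rewrite negb_imply negbK => /andP [hqp /eqP hq].
have [hi ho [s [_ hs]]] := AO_parts ha.
apply: (@descent m hm (mu a).+1) => //; split => //.
- exists p, q; split => //; by rewrite eq_sym.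
- exists (s p), (s q); split; first by apply: contra hqp => /eqP /perm_inj ->.
  move=> x; split; apply/eqP => e; have := hs _ _ e => /perm_inj ex; subst x;
    by rewrite ?hp ?hq in e.
Qed.

Theorem theorem4p8 (n : nat) (hn : 2 <= n) :
  (exists A : {set ptrans n}, generates_AO A /\ #|A| = n) /\
  (forall A : {set ptrans n}, generates_AO A -> n <= #|A|).
Proof.
case: n hn => [|m] // hn; have hm : 0 < m by [].
split.
- exists (Agen m); split; last exact: card_Agen.
  split.
  + move=> g /imsetP [i _ ->]; exact: fgen_AO.
  + move=> a ha; exact: AO_gen.
- move=> A hA; exact: lower_bound.
Qed.
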